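(* Let $n\ge3$, let $U$ be the cyclic shift on $\mathbb C^n$ given by $Ue_k=e_{k+1}$ (indices mod $n$), and let $T=U+I$. Then \[\|T\|_m=\frac2n\sum_{k=0}^{n-1}\Big|\cos\frac{k\pi}n\Big|=\begin{cases}\dfrac{2\cos(\frac\pi{2n})}{n\sin(\frac\pi{2n})}& n\text{ even},\\[2ex]\dfrac{2}{n\sin(\frac\pi{2n})}& n\text{ odd}.\end{cases}\] Consequently $\|T\|_m\to 4/\pi$ as $n\to\infty$, the values for odd $n$ decreasing to $4/\pi$ and the values for even $n$ increasing to $4/\pi$.
   Context: $\|T\|_m$ is the norm of the Schur multiplier $R=[r_{ij}]\mapsto[t_{ij}r_{ij}]$ on $n\times n$ complex matrices with the operator norm, where $[t_{ij}]$ is the matrix of $T$ in the standard basis $e_1,\dots,e_n$. *)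

(* Defs.v *)
From HB Require Import structures.
From mathcomp Require Import all_boot all_order all_algebra.
From mathcomp Require Import all_classical all_reals all_analysis.
From mathcomp Require Import complex.
Set Implicit Arguments. Unset Strict Implicit. Unset Printing Implicit Defensive.
Import Order.TTheory GRing.Theory Num.Theory.
Import numFieldNormedType.Exports.
Local Open Scope ring_scope.
Local Open Scope classical_set_scope.

Definition vnorm2 (R : realType) (n : nat) (x : 'cV[R[i]]_n) : R :=
  Num.sqrt (\sum_(k < n) (ComplexField.Normc.normc (x k 0)) ^+ 2).

Definition opnorm (R : realType) (n : nat) (A : 'M[R[i]]_n) : R :=
  sup [set vnorm2 (A *m x) | x in [set x : 'cV[R[i]]_n | vnorm2 x <= 1]].

Definition schur_mul (R : realType) (n : nat) (T A : 'M[R[i]]_n) : 'M[R[i]]_n :=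
  \matrix_(i, j) (T i j * A i j).

Definition schur_norm (R : realType) (n : nat) (T : 'M[R[i]]_n) : R :=
  sup [set opnorm (schur_mul T A) | A in [set A : 'M[R[i]]_n | opnorm A <= 1]].

(* cyclic shift U e_k = e_{k+1 mod n}: U i j = 1 iff i = j+1 mod n *)
Definition cshift (R : realType) (n : nat) : 'M[R[i]]_n :=
  \matrix_(i, j) ((nat_of_ord i == (j.+1 %% n)%N)%:R).

Definition Tmat (R : realType) (n : nat) : 'M[R[i]]_n := cshift R n + 1%:M.

(* Main.v *)
Require Import Defs.
From HB Require Import structures.
From mathcomp Require Import all_boot all_order all_algebra.
From mathcomp Require Import all_classical all_reals all_analysis.
From mathcomp Require Import complex.
From mathcomp Require Import ring lra zify.
Set Implicit Arguments. Unset Strict Implicit. Unset Printing Implicit Defensive.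
Import Order.TTheory GRing.Theory Num.Theory.
Import numFieldNormedType.Exports.
Local Open Scope ring_scope.
Local Open Scope classical_set_scope.

Section S.
Variable R : realType.
Notation C := (R[i]).
Notation normc := (@ComplexField.Normc.normc R).
Definition e (t : R) : C := (cos t +i* sin t)%C.
Lemma eD a b : e (a + b) = e a * e b.
Proof. rewrite /e /= cosD sinD; congr (_ +i* _)%C; ring. Qed.
Lemma e0 : e 0 = 1.
Proof. by rewrite /e cos0 sin0. Qed.
Lemma eN a : e (- a) = (e a)^*%C.
Proof. by rewrite /e cosN sinN. Qed.
Lemma eJ a : e a * (e a)^*%C = 1.
Proof. rewrite /e /=; congr (_ +i* _)%C; last ring. rewrite -(cos2Dsin2 a); ring. Qed.
Lemma normc_e a : normc (e a) = 1.
Proof. by rewrite /e /= cos2Dsin2 sqrtr1. Qed.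
Lemma eMn a k : e (a *+ k) = e a ^+ k.
Proof. elim: k => [|k IH]; first by rewrite mulr0n e0. by rewrite mulrS eD IH exprS. Qed.
Lemma e2pi k : e ((pi *+ 2) *+ k) = 1.
Proof. by rewrite eMn /e cos2pi sin2pi expr1n. Qed.
Lemma geom0 (z : C) n : z != 1 -> z ^+ n = 1 -> \sum_(k < n) z ^+ k = 0.
Proof.
move=> z1 zn.
have : (z - 1) * \sum_(k < n) z ^+ k = z ^+ n - 1.
  elim: n {zn} => [|n IH]; first by rewrite big_ord0 expr0 subrr mulr0.
  by rewrite big_ord_recr /= mulrDr IH exprS; ring.
by rewrite zn subrr => /eqP; rewrite mulf_eq0 subr_eq0 (negPf z1) /= => /eqP.
Qed.

Lemma cos_lt1 (t : R) : 0 < t < pi *+ 2 -> cos t < 1.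
Proof.
move=> /andP[t0 t2].
have -> : t = (t / 2) *+ 2 by rewrite -mulr_natr divfK.
rewrite cos_mulr2n cos2sin2.
have : 0 < sin (t / 2) by apply: sin_gt0_pi; apply/andP; split; [lra|rewrite mulr2n in t2; lra].
move=> s0. have : 0 < sin (t/2) ^+ 2 by rewrite exprn_gt0. move=> h. rewrite mulr2n. lra.
Qed.

Variable n : nat.
Hypothesis n0 : (0 < n)%N.
Notation N := (n%:R : R).
Lemma N0 : 0 < N. Proof. by rewrite ltr0n. Qed.
Definition th := pi *+ 2 / N.
Definition ee (k i : nat) : C := e (th * (k * i)%:R).
Lemma thN : th * N = pi *+ 2.
Proof. by rewrite /th divfK // gt_eqF // N0. Qed.
Lemma eeC k i : ee k i = ee i k. Proof. by rewrite /ee mulnC. Qed.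
Lemma eeD k i j : ee k (i + j) = ee k i * ee k j.
Proof. by rewrite /ee -eD mulnDr natrD mulrDr. Qed.
Lemma ee_mod k i : ee k i = ee k (i %% n).
Proof.
rewrite {1}(divn_eq i n) eeD; set r := ee k (i %% n).
rewrite /ee mulnA natrM mulrA [th * _]mulrC -mulrA thN mulr_natl e2pi mul1r //.
Qed.
Lemma eeJ k i : ee k i * (ee k i)^*%C = 1. Proof. exact: eJ. Qed.

Lemma ortho i j : (i < n)%N -> (j < n)%N ->
  \sum_(k < n) ee k i * (ee k j)^*%C = if i == j then n%:R else 0.
Proof.
move=> ilt jlt.
set t := th * (i%:R - j%:R).
have E : forall k : 'I_n, ee k i * (ee k j)^*%C = e t ^+ k.
  move=> k; rewrite /ee -eN -eD -eMn; congr e.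
  rewrite /t !natrM -mulr_natr; ring.
rewrite (eq_bigr _ (fun k _ => E k)).
case: eqP => [ij|ij].
  rewrite /t ij subrr mulr0 e0 (eq_bigr (fun _ => 1)) ?sumr_const ?card_ord; last by move=> *; rewrite expr1n.
  done.
apply: geom0.
  apply/negP => /eqP H.
  move: H; rewrite /e => -[]; rewrite -cos_norm => hc _.
  suff : cos `|t| < 1 by rewrite hc ltxx.
  apply: cos_lt1.
  have hth : 0 < th by rewrite /th divr_gt0 ?N0 // mulrn_wgt0 // pi_gt0.
  rewrite /t normrM (gtr0_norm hth).
  have : `|i%:R - j%:R| < N :> R.
    rewrite ltr_norml; apply/andP; split.
      have : (j%:R < N :> R) by rewrite ltr_nat. have : 0 <= i%:R :> R by []. lra.
    have : (i%:R < N :> R) by rewrite ltr_nat. have : 0 <= j%:R :> R by []. lra.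
  have : 0 < `|i%:R - j%:R| :> R.
    rewrite normr_gt0 subr_eq0; apply/negP => /eqP /eqP; rewrite eqr_nat => /eqP; exact: ij.
  move=> h1 h2; apply/andP; split; first by rewrite mulr_gt0.
  rewrite -thN; rewrite ltr_pM2l //.
rewrite -eMn.
have -> : t *+ n = (pi *+ 2) *+ i + - ((pi *+ 2) *+ j).
  rewrite /t -(mulr_natr _ n) -(mulr_natr (pi *+ 2) i) -(mulr_natr (pi *+ 2) j) -thN; ring.
by rewrite eD eN !e2pi conjc1 mulr1.
Qed.
End S.


Section B.
Variable R : realType.
Notation C := (R[i]).
Notation nc := (@ComplexField.Normc.normc R).
Lemma nc_ge0 (z : C) : 0 <= nc z. Proof. by case: z => a b; rewrite /= sqrtr_ge0. Qed.
Lemma ncJ (z : C) : nc (z^*)%C = nc z. Proof. by case: z => a b /=; rewrite sqrrN. Qed.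
Lemma nc2 (z : C) : ((nc z ^+ 2)%:C)%C = z * (z^*)%C.
Proof.
case: z => a b /=; rewrite sqr_sqrtr ?addr_ge0 ?sqr_ge0 //; congr (_ +i* _)%C; ring.
Qed.
Lemma ncM (z w : C) : nc (z * w) = nc z * nc w. Proof. exact: ComplexField.Normc.normcM. Qed.
Lemma nc_sum (I : Type) (r : seq I) (P : pred I) (f : I -> C) :
  nc (\sum_(i <- r | P i) f i) <= \sum_(i <- r | P i) nc (f i).
Proof.
apply: (big_rec2 (fun a b => nc a <= b)); first by rewrite ComplexField.Normc.normc0.
move=> i y1 y2 _ h; apply: le_trans (le_normcD _ _) _; exact: lerD.
Qed.
Lemma ncR (r : R) : 0 <= r -> nc ((r%:C)%C) = r.
Proof. by move=> r0 /=; rewrite expr0n addr0 sqrtr_sqr ger0_norm. Qed.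

Variable n : nat.
Notation vn := (@vnorm2 R n).
Implicit Types x y : 'cV[C]_n.
Lemma vn_ge0 x : 0 <= vn x. Proof. exact: sqrtr_ge0. Qed.
Lemma vn_sq x : vn x ^+ 2 = \sum_(k < n) nc (x k 0) ^+ 2.
Proof. by rewrite /vnorm2 sqr_sqrtr // sumr_ge0 // => *; rewrite sqr_ge0. Qed.
Lemma vn_eq x y : (forall k, nc (x k 0) = nc (y k 0)) -> vn x = vn y.
Proof. by move=> h; rewrite /vnorm2; congr Num.sqrt; apply: eq_bigr => k _; rewrite h. Qed.
Lemma vnZ c x : vn (c *: x) = nc c * vn x.
Proof.
rewrite /vnorm2 (eq_bigr (fun k => nc c ^+ 2 * nc (x k 0) ^+ 2)); last first.
  by move=> k _; rewrite mxE ncM exprMn.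
rewrite -mulr_sumr sqrtrM ?sqr_ge0 // sqrtr_sqr ger0_norm // nc_ge0 //.
Qed.
Lemma vn_entry x k : nc (x k 0) <= vn x.
Proof.
rewrite -(ger0_norm (nc_ge0 (x k 0))) -sqrtr_sqr /vnorm2 ler_sqrt; last first.
  by rewrite sumr_ge0 // => *; rewrite sqr_ge0.
rewrite (bigD1 k) //= lerDl; apply: sumr_ge0 => *; exact: sqr_ge0.
Qed.
Lemma vn0 x : vn x = 0 -> x = 0.
Proof.
move=> h; apply/matrixP => i j; rewrite ord1 mxE; apply: ComplexField.Normc.eq0_normc.
apply/eqP; rewrite eq_le nc_ge0 andbT -h; exact: vn_entry.
Qed.

Lemma CS (a b : 'I_n -> R) :
  (\sum_k a k * b k) ^+ 2 <= (\sum_k a k ^+ 2) * (\sum_k b k ^+ 2).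
Proof.
set A := \sum_k a k ^+ 2; set B := \sum_k a k * b k; set Cc := \sum_k b k ^+ 2.
have A0 : 0 <= A by rewrite sumr_ge0 // => *; rewrite sqr_ge0.
have C0 : 0 <= Cc by rewrite sumr_ge0 // => *; rewrite sqr_ge0.
have q : forall t, 0 <= A * t ^+ 2 + 2 * B * t + Cc.
  move=> t; have -> : A * t ^+ 2 + 2 * B * t + Cc = \sum_k (a k * t + b k) ^+ 2.
    rewrite /A /B /Cc mulr_suml mulr_sumr mulr_suml -!big_split /=.
    by apply: eq_bigr => k _; ring.
  by rewrite sumr_ge0 // => *; rewrite sqr_ge0.
have [A00|Apos] := eqVneq A 0.
  have a0 : forall k, a k = 0.
    move=> k; apply/eqP; rewrite -sqrf_eq0; apply/eqP.
    move/eqP: A00; rewrite psumr_eq0 => [/allP h|]; last by move=> *; rewrite sqr_ge0.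
    by apply/eqP; apply: h; rewrite mem_index_enum.
  rewrite /B big1 ?expr0n ?mulr_ge0 //= => k _; by rewrite a0 mul0r.
have Ap : 0 < A by rewrite lt_def Apos.
set u := B / A.
have Bu : B = u * A by rewrite /u divfK.
have := q (- u); rewrite Bu => h.
nra.
Qed.

Lemma vnD x y : vn (x + y) <= vn x + vn y.
Proof.
set a := fun k => nc (x k 0); set b := fun k => nc (y k 0).
have h1 : vn (x + y) ^+ 2 <= \sum_k (a k + b k) ^+ 2.
  rewrite vn_sq; apply: ler_sum => k _; rewrite mxE.
  rewrite ler_sqr ?nnegrE ?nc_ge0 ?addr_ge0 ?nc_ge0 //; exact: le_normcD.
have h2 : \sum_k (a k + b k) ^+ 2 = vn x ^+ 2 + vn y ^+ 2 + 2 * \sum_k a k * b k.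
  rewrite !vn_sq mulr_sumr -!big_split; apply: eq_bigr => k _ /=; rewrite /a /b; ring.
have h3 : \sum_k a k * b k <= vn x * vn y.
  have := CS a b; rewrite -!vn_sq -exprMn => h.
  apply: le_trans (ler_norm _) _.
  by rewrite -ler_sqr ?nnegrE ?normr_ge0 ?mulr_ge0 ?vn_ge0 // real_normK ?num_real.
have := vn_ge0 x; have := vn_ge0 y; have := vn_ge0 (x + y) => *.
rewrite -ler_sqr ?nnegrE ?addr_ge0 //; nra.
Qed.

Lemma vn_sum (I : Type) (r : seq I) (P : pred I) (f : I -> 'cV[C]_n) :
  vn (\sum_(i <- r | P i) f i) <= \sum_(i <- r | P i) vn (f i).
Proof.
apply: (big_rec2 (fun a b => vn a <= b)).
  by rewrite /vnorm2 big1 ?sqrtr0 // => k _; rewrite mxE ComplexField.Normc.normc0 expr0n.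
move=> i y1 y2 _ h; apply: le_trans (vnD _ _) _; exact: lerD.
Qed.
End B.


Section Cs.
Variable R : realType.
Notation C := (R[i]).
Notation nc := (@ComplexField.Normc.normc R).
Variable n : nat.
Notation vn := (@vnorm2 R n).
Implicit Types x y : 'cV[C]_n.
Implicit Types A : 'M[C]_n.
Lemma vn_zero : vn 0 = 0.
Proof. by rewrite /vnorm2 big1 ?sqrtr0 // => k _; rewrite mxE ComplexField.Normc.normc0 expr0n. Qed.

Lemma opS_bound A : has_ubound [set vn (A *m x) | x in [set x | vn x <= 1]].
Proof.
exists (Num.sqrt (\sum_i (\sum_j nc (A i j)) ^+ 2)) => _ [x /= x1 <-].
rewrite /vnorm2 ler_sqrt; last by apply: sumr_ge0 => *; exact: sqr_ge0.
apply: ler_sum => i _; rewrite ler_sqr ?nnegrE ?nc_ge0 ?sumr_ge0 //; last by move=> *; exact: nc_ge0.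
rewrite mxE; apply: le_trans (nc_sum _ _ _) _; apply: ler_sum => j _.
rewrite ncM; rewrite -[X in _ <= X]mulr1; apply: ler_wpM2l; first exact: nc_ge0.
exact: le_trans (vn_entry _ _) x1.
Qed.

Lemma opnorm_ge0 A : 0 <= opnorm A.
Proof.
apply: (ub_le_sup (opS_bound A)); exists 0; first by rewrite /= vn_zero.
by rewrite mulmx0 vn_zero.
Qed.

Lemma opnorm_ub A x : vn (A *m x) <= opnorm A * vn x.
Proof.
have [x0|xn0] := eqVneq (vn x) 0.
  by rewrite (vn0 x0) mulmx0 !vn_zero mulr0.
have xp : 0 < vn x by rewrite lt_def xn0 vn_ge0.
set c : C := (((vn x)^-1)%:C)%C.
have h : vn (c *: x) <= 1 by rewrite vnZ ncR ?invr_ge0 ?vn_ge0 // mulVf.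
have : [set vn (A *m x) | x in [set x | vn x <= 1]] (vn (A *m (c *: x))) by exists (c *: x).
move/(ub_le_sup (opS_bound A)).
rewrite /= -scalemxAr vnZ ncR ?invr_ge0 ?vn_ge0 //.
move=> h2; have := ler_wpM2r (vn_ge0 x) h2; by rewrite mulrAC mulVf // mul1r.
Qed.

Lemma opnorm_le A c : 0 <= c -> (forall x, vn (A *m x) <= c * vn x) -> opnorm A <= c.
Proof.
move=> c0 h; apply: ge_sup.
  by exists 0, 0; rewrite /= ?vn_zero // mulmx0 vn_zero.
move=> _ [x /= x1 <-]; apply: le_trans (h x) _.
by rewrite -[X in _ <= X]mulr1 ler_wpM2l.
Qed.

Lemma schur_eq (T : 'M[C]_n) (s : R) :
  (forall A, opnorm A <= 1 -> opnorm (schur_mul T A) <= s) ->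
  (exists2 A, opnorm A <= 1 & s <= opnorm (schur_mul T A)) ->
  schur_norm T = s.
Proof.
move=> up [A0 A01 lo]; apply/eqP; rewrite eq_le; apply/andP; split.
  apply: ge_sup; first by exists (opnorm (schur_mul T A0)), A0.
  by move=> _ [A /= A1 <-]; exact: up.
apply: le_trans lo _; apply: ub_le_sup; last by exists A0.
by exists s => _ [A /= A1 <-]; exact: up.
Qed.
End Cs.


Section D.
Variable R : realType.
Notation C := (R[i]).
Notation nc := (@ComplexField.Normc.normc R).
Variable n : nat.
Hypothesis n0 : (0 < n)%N.
Notation vn := (@vnorm2 R n).
Notation E := (@ee R n).
Notation N := (n%:R : R).
Implicit Types x y : 'cV[C]_n.
Implicit Types A : 'M[C]_n.

Definition chat k : C := 1 + (E k 1)^*%C.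

Lemma NC0 : (n%:R : C) != 0. Proof. by rewrite pnatr_eq0 -lt0n. Qed.

Lemma Tdec (i j : 'I_n) :
  Tmat R n i j = (n%:R : C)^-1 * \sum_(k < n) chat k * E k i * (E k j)^*%C.
Proof.
have e1 : \sum_(k < n) chat k * E k i * (E k j)^*%C =
   \sum_(k < n) E k i * (E k j)^*%C + \sum_(k < n) E k i * (E k ((j + 1) %% n)%N)^*%C.
  rewrite -big_split; apply: eq_bigr => k _.
  rewrite -(ee_mod _ n0) eeD rmorphM /chat mulrDl mul1r mulrDl; congr (_ + _).
  by rewrite [X in X * _]mulrC -mulrA [(E k 1)^*%C * _]mulrC.
rewrite e1 (ortho _ n0) ?ltn_ord // (ortho _ n0) ?ltn_ord ?ltn_pmod //.
rewrite !mxE /= mulrDr addn1 addrC; congr (_ + _).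
  case: (i =P j) => [->|ij]; first by rewrite !eqxx mulVf ?NC0.
  have h1 : (i == j) = false by apply/eqP.
  have h2 : (nat_of_ord i == j) = false by apply/eqP => /val_inj.
  by rewrite ?h1 ?h2 mulr0.
by case: eqP => _; rewrite ?mulr0 ?mulVf ?NC0.
Qed.
Definition yk k x : 'cV[C]_n := \col_j ((E k j)^*%C * x j 0).
Definition zk k A x : 'cV[C]_n := \col_i (E k i * (A *m yk k x) i 0).

Lemma schur_vec A x :
  schur_mul (Tmat R n) A *m x = \sum_(k < n) ((n%:R : C)^-1 * chat k) *: zk k A x.
Proof.
apply/matrixP => i l; rewrite ord1 summxE mxE.
under eq_bigr => j _ do rewrite mxE Tdec mulr_sumr !mulr_suml.
rewrite exchange_big; apply: eq_bigr => k _.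
rewrite !mxE mulr_sumr mulr_sumr; apply: eq_bigr => j _; rewrite !mxE.
set a := (n%:R : C)^-1; set b := chat k; set c := E k i; set d := (E k j)^*%C.
set f := A i j; set g := x j 0.
by rewrite !mulrA -[a * b * c * d * f]mulrA [d * f]mulrC mulrA.
Qed.
Lemma nc_invN : nc ((n%:R : C)^-1) = N^-1.
Proof.
rewrite ComplexField.Normc.normcV; congr (_^-1).
by rewrite -[n%:R : C](rmorph_nat (@real_complex_def R (Phant R))) ncR.
Qed.
Lemma vn_zk k A x : vn (zk k A x) = vn (A *m yk k x).
Proof. by apply: vn_eq => i; rewrite mxE ncM /ee normc_e mul1r. Qed.
Lemma vn_yk k x : vn (yk k x) = vn x.
Proof. by apply: vn_eq => i; rewrite mxE ncM ncJ /ee normc_e mul1r. Qed.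

Definition svalue := N^-1 * \sum_(k < n) nc (chat k).
Lemma sval_ge0 : 0 <= svalue.
Proof. by rewrite /svalue mulr_ge0 ?invr_ge0 ?ler0n ?sumr_ge0 // => *; exact: nc_ge0. Qed.

Lemma upper A : opnorm A <= 1 -> opnorm (schur_mul (Tmat R n) A) <= svalue.
Proof.
move=> A1; apply: opnorm_le; first exact: sval_ge0.
move=> x; rewrite schur_vec; apply: le_trans (vn_sum _ _ _) _.
rewrite /svalue mulr_sumr mulr_suml; apply: ler_sum => k _.
rewrite vnZ ncM nc_invN vn_zk -!mulrA; apply: ler_wpM2l; first by rewrite invr_ge0 ler0n.
apply: ler_wpM2l; first exact: nc_ge0.
apply: le_trans (opnorm_ub _ _) _; rewrite vn_yk -[X in _ <= X]mul1r.
by apply: ler_wpM2r; first exact: vn_ge0.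
Qed.
End D.


Arguments e : simpl never.
Arguments ee : simpl never.
Section E.
Variable R : realType.
Notation C := (R[i]).
Notation nc := (@ComplexField.Normc.normc R).
Variable n : nat.
Hypothesis n0 : (0 < n)%N.
Notation vn := (@vnorm2 R n).
Notation E := (@ee R n).
Notation N := (n%:R : R).
Implicit Types x y : 'cV[C]_n.
Implicit Types A : 'M[C]_n.
Local Notation sq z := (z * (z^*)%C).

Lemma cM (a b : C) : (a * b)^*%C = a^*%C * b^*%C. Proof. exact: rmorphM. Qed.
Lemma cS (I : Type) (r : seq I) (P : pred I) (f : I -> C) :
  (\sum_(i <- r | P i) f i)^*%C = \sum_(i <- r | P i) (f i)^*%C.
Proof. exact: rmorph_sum. Qed.

Lemma sqM (a b : C) : sq (a * b) = sq a * sq b.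
Proof. by rewrite cM mulrACA. Qed.
Lemma sqJ (a : C) : sq (a^*%C) = sq a.
Proof. by rewrite conjcK mulrC. Qed.

Lemma ortho' (k l : 'I_n) : \sum_(i < n) E i k * (E i l)^*%C = if k == l then n%:R else 0.
Proof. by rewrite (ortho _ n0). Qed.

Lemma sum_delta (F : 'I_n -> C) (j0 : 'I_n) : \sum_j (if j == j0 then F j else 0) = F j0.
Proof.
rewrite (bigD1 j0) //= eqxx big1 ?addr0 // => j /negPf ->; done.
Qed.

Lemma sum_delta' (F : 'I_n -> C) (j0 : 'I_n) : \sum_j (if j0 == j then F j else 0) = F j0.
Proof.
rewrite (bigD1 j0) //= eqxx big1 ?addr0 // => j; rewrite eq_sym => /negPf ->; done.
Qed.

Lemma parseval (a : 'I_n -> C) :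
  \sum_(i < n) sq (\sum_(k < n) a k * E k i) = n%:R * \sum_(k < n) sq (a k).
Proof.
have h : forall i : 'I_n, sq (\sum_(k < n) a k * E k i) =
    \sum_(k < n) \sum_(l < n) (a k * (a l)^*%C) * (E i k * (E i l)^*%C).
  move=> i; rewrite rmorph_sum mulr_suml; apply: eq_bigr => k _.
  rewrite mulr_sumr; apply: eq_bigr => l _; rewrite rmorphM (eeC R n k i) (eeC R n l i).
  by rewrite -!mulrA; congr (_ * _); rewrite mulrCA; congr (_ * _); rewrite mulrC.
rewrite (eq_bigr _ (fun i _ => h i)) exchange_big /= mulr_sumr; apply: eq_bigr => k _.
rewrite exchange_big /=.
under eq_bigr => l _ do rewrite -mulr_sumr ortho'.
rewrite (bigD1 k) //= eqxx big1 ?addr0; first by rewrite mulrC.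
by move=> l; rewrite eq_sym => /negPf ->; rewrite mulr0.
Qed.

Lemma vn_sqC x : ((vn x ^+ 2)%:C)%C = \sum_(k < n) sq (x k 0).
Proof. by rewrite vn_sq rmorph_sum; apply: eq_bigr => k _; exact: nc2. Qed.

Definition dk k : C := 1 + E k 1.
Definition eps k : C := if dk k == 0 then 1 else (dk k)^*%C / ((nc (dk k))%:C)%C.

Lemma eps_sq k : sq (eps k) = 1.
Proof.
rewrite -nc2 /eps; case: eqP => [_|dn]; first by rewrite ComplexField.Normc.normc1 expr1n.
have ncn : nc (dk k) != 0 by apply/eqP => /ComplexField.Normc.eq0_normc.
by rewrite ncM ncJ ComplexField.Normc.normcV ncR ?nc_ge0 // mulfV // expr1n.
Qed.

Lemma eps_d k : eps k * dk k = ((nc (dk k))%:C)%C.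
Proof.
rewrite /eps; case: eqP => [->|dn]; first by rewrite ComplexField.Normc.normc0 mulr0.
have ncn : ((nc (dk k))%:C)%C != 0.
  apply/eqP => h; apply: dn; apply: ComplexField.Normc.eq0_normc; by case: h.
by rewrite mulrAC [_^*%C * dk k]mulrC -nc2 rmorphXn expr2 mulfK.
Qed.

Definition Amat : 'M[C]_n := \matrix_(i, j) ((n%:R : C)^-1 * \sum_(k < n) eps k * E k i * (E k j)^*%C).

Lemma Amat_iso x : vn (Amat *m x) = vn x.
Proof.
set X := fun k : 'I_n => \sum_(j < n) (x j 0)^*%C * E j k.
have hA : forall i : 'I_n, (Amat *m x) i 0 = \sum_(k < n) ((n%:R : C)^-1 * eps k * (X k)^*%C) * E k i.
  move=> i; rewrite mxE.
  under eq_bigr => j _ do rewrite mxE mulr_sumr mulr_suml.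
  rewrite exchange_big; apply: eq_bigr => k _ /=.
  rewrite cS !mulr_sumr mulr_suml; apply: eq_bigr => j _.
  rewrite cM conjcK (eeC R n j k).
  set a := (n%:R : C)^-1; set b := eps k; set c := E k i; set d := (E k j)^*%C; set f := x j 0.
  by rewrite !mulrA -[a * b * c * d]mulrA [c * d]mulrC mulrA -[a * b * d * c * f]mulrA [c * f]mulrC mulrA -[a * b * d * f]mulrA [d * f]mulrC mulrA.
have hX : \sum_(k < n) sq (X k) = n%:R * \sum_(j < n) sq (x j 0).
  have -> : \sum_(j < n) sq (x j 0) = \sum_(j < n) sq ((x j 0)^*%C).
    by apply: eq_bigr => j _; rewrite conjcK mulrC.
  by rewrite -(parseval (fun j => (x j 0)^*%C)).
suff : ((vn (Amat *m x) ^+ 2)%:C)%C = ((vn x ^+ 2)%:C)%C.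
  move/complexI/eqP; rewrite eqf_sqr => /orP[/eqP //|/eqP h].
  have h1 := vn_ge0 (Amat *m x); have h2 := vn_ge0 x; rewrite h in h1 *.
  have h0 : vn x = 0 by lra.
  by rewrite h0 oppr0.
rewrite !vn_sqC.
under eq_bigr => i _ do rewrite hA.
rewrite parseval.
under eq_bigr => k _ do rewrite !sqM eps_sq mulr1 sqJ.
rewrite -mulr_sumr hX conjc_inv conjc_nat !mulrA mulfV ?NC0 // mul1r mulVf ?NC0 // mul1r.
done.
Qed.
Lemma modS j : (j < n)%N -> (j.+1 %% n)%N = if j.+1 == n then 0%N else j.+1.
Proof. move=> jn; case: eqP => [->|h]; first by rewrite modnn. rewrite modn_small //; lia. Qed.
Lemma modP i : (i < n)%N -> ((i + n.-1) %% n)%N = if i == 0%N then n.-1 else i.-1.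
Proof.
move=> iN; case: eqP => [->|h]; first by rewrite add0n modn_small // prednK.
have -> : (i + n.-1 = i.-1 + n)%N by lia.
by rewrite modnDr modn_small //; lia.
Qed.
Definition jprev (i : 'I_n) : 'I_n := Ordinal (ltn_pmod (i + n.-1) n0).
Lemma jprevP (i j : 'I_n) : (nat_of_ord i == (j.+1 %% n)%N) = (j == jprev i).
Proof.
rewrite -val_eqE /= modS // modP //.
have := ltn_ord i; have := ltn_ord j.
case: (j.+1 =P n) => h1; case: (nat_of_ord i =P 0%N) => h2 ? ?; apply/eqP/eqP; lia.
Qed.

Lemma nat_if (b : bool) (z : C) : b%:R * z = if b then z else 0.
Proof. by case: b; rewrite ?mul1r ?mul0r. Qed.

Lemma dkJ k : (dk k)^*%C = chat R n k.
Proof. by rewrite /dk /chat rmorphD rmorph1. Qed.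

Lemma svC : ((svalue R n)%:C)%C = (n%:R : C)^-1 * \sum_(k < n) ((nc (dk k))%:C)%C.
Proof.
rewrite /svalue rmorphM fmorphV rmorph_nat rmorph_sum; congr (_ * _).
by apply: eq_bigr => k _; rewrite -dkJ ncJ.
Qed.

Definition ones : 'cV[C]_n := const_mx 1.

Lemma schur_ones : schur_mul (Tmat R n) Amat *m ones = ((svalue R n)%:C)%C *: ones.
Proof.
apply/matrixP => i l; rewrite ord1 !mxE.
under eq_bigr => j _ do rewrite !mxE jprevP mulr1 mulrDl !nat_if.
rewrite big_split /= sum_delta.
rewrite sum_delta' mulr1 svC -mulrDr; congr (_ * _).
rewrite -big_split /=; apply: eq_bigr => k _.
have hi : E k i = E k (jprev i) * E k 1.
  have := jprevP i (jprev i); rewrite eqxx => /eqP ->.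
  by rewrite -(ee_mod _ n0) -eeD addn1.
rewrite -[eps k * E k i * (E k i)^*%C]mulrA eeJ mulr1 hi.
rewrite -mulrA [E k (jprev i) * E k 1]mulrC -mulrA eeJ mulr1.
by rewrite -eps_d /dk mulrDr mulr1 addrC.
Qed.
End E.


Section F.
Variable R : realType.
Notation C := (R[i]).
Notation nc := (@ComplexField.Normc.normc R).
Variable n : nat.
Hypothesis n0 : (0 < n)%N.
Notation vn := (@vnorm2 R n).
Notation E := (@ee R n).
Notation N := (n%:R : R).

Lemma vn_ones : vn (ones R n) = Num.sqrt N.
Proof.
rewrite /vnorm2; congr Num.sqrt.
rewrite (eq_bigr (fun _ => 1)); first by rewrite sumr_const card_ord.
by move=> k _; rewrite mxE ComplexField.Normc.normc1 expr1n.
Qed.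

Lemma Amat_le1 : opnorm (Amat R n) <= 1.
Proof. by apply: opnorm_le => // x; rewrite (Amat_iso n0) mul1r. Qed.

Lemma lower : svalue R n <= opnorm (schur_mul (Tmat R n) (Amat R n)).
Proof.
have h := opnorm_ub (schur_mul (Tmat R n) (Amat R n)) (ones R n).
rewrite (schur_ones R n0) vnZ ncR ?sval_ge0 // vn_ones in h.
by rewrite -(ler_pM2r (_ : 0 < Num.sqrt N)) // sqrtr_gt0 ltr0n.
Qed.

Theorem partI : schur_norm (Tmat R n) = svalue R n.
Proof.
apply: schur_eq; first by move=> A; exact: (upper n0).
by exists (Amat R n); [exact: Amat_le1 | exact: lower].
Qed.

Lemma nc_chat (k : nat) : nc (chat R n k) = 2 * `|cos (k%:R * pi / N)|.
Proof.
have hth : th R n * (k * 1)%:R = (k%:R * pi / N) *+ 2.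
  rewrite /th muln1 !mulr2n; field; rewrite pnatr_eq0 -lt0n //.
rewrite /chat /ee hth -eN /e /= cosN sinN cos_mulr2n sin_mulr2n.
set c := cos _; set s := sin _.
have hs : s ^+ 2 = 1 - c ^+ 2 by rewrite /s /c sin2cos2.
have -> : (1 + (c ^+ 2 *+ 2 - 1)) ^+ 2 + (0 + - ((c * s) *+ 2)) ^+ 2 = (2 * c) ^+ 2.
  have -> : (1 + (c ^+ 2 *+ 2 - 1)) ^+ 2 + (0 + - ((c * s) *+ 2)) ^+ 2 = 4 * c ^+ 4 + 4 * c ^+ 2 * s ^+ 2 by ring.
  rewrite hs; ring.
by rewrite sqrtr_sqr normrM ger0_norm.
Qed.

Lemma svalueE : svalue R n = 2 / N * \sum_(k < n) `|cos (k%:R * pi / N)|.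
Proof.
rewrite /svalue (eq_bigr _ (fun (k : 'I_n) _ => nc_chat k)) -mulr_sumr mulrA; congr (_ * _).
by rewrite mulrC.
Qed.
End F.


Section G.
Variable R : realType.
Variable n : nat.
Hypothesis n0 : (0 < n)%N.
Notation N := (n%:R : R).
Let h : R := pi / (2 * N).
Lemma Ngt0 : 0 < N. Proof. by rewrite ltr0n. Qed.
Lemma pih : pi = h * (2 * N).
Proof. by rewrite /h divfK // mulf_neq0 // gt_eqF // Ngt0. Qed.
Lemma h_gt0 : 0 < h.
Proof. by rewrite /h divr_gt0 ?pi_gt0 // mulr_gt0 // Ngt0. Qed.
Lemma N_ge1 : 1 <= N. Proof. by rewrite ler1n. Qed.
Lemma sinh_gt0 : 0 < sin h.
Proof.
apply: sin_gt0_pi; rewrite h_gt0 /=.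
have := pih; have := h_gt0; have := N_ge1; have := pi_gt0 R; nra.
Qed.

Lemma telesc K : 2 * sin h * \sum_(k < K.+1) cos ((2 * k)%:R * h) = sin ((2 * K).+1%:R * h) + sin h.
Proof.
elim: K => [|K IH].
  rewrite big_ord1 (_ : (2 * @nat_of_ord 1 ord0)%:R * h = 0) ?cos0 ?mulr1; last by rewrite /= muln0 mul0r.
  rewrite muln0 mul1r; ring.
rewrite big_ord_recr /= mulrDr IH.
set a := (2 * K.+1)%:R * h.
have e1 : (2 * K.+1).+1%:R * h = a + h by rewrite /a; rewrite -addn1 natrD; ring.
have e2 : (2 * K).+1%:R * h = a - h by rewrite /a mulnS -addn1 addSn !natrD /=; ring.
rewrite e1 e2 !sinD cosN sinN; ring.
Qed.

Lemma sum_cos1 : \sum_(k < n) cos ((2 * k)%:R * h) = 1.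
Proof.
have := telesc n.-1; rewrite prednK //.
have -> : (2 * n.-1).+1%:R * h = pi - h.
  rewrite pih; have -> : ((2 * n.-1).+1)%:R = 2 * N - 1 :> R.
    rewrite -[in RHS](prednK n0); ring.
  ring.
rewrite sinB cospi sinpi => h2.
have := sinh_gt0 => s0.
apply: (mulfI (_ : 2 * sin h != 0)); first by rewrite mulf_neq0 // gt_eqF.
by rewrite h2 mulr1; ring.
Qed.

Lemma ang (k : nat) : k%:R * pi / N = (2 * k)%:R * h.
Proof. by rewrite pih natrM; field; rewrite pnatr_eq0 -lt0n. Qed.

Lemma cos_sign (k : nat) : (k < n)%N ->
  `|cos ((2 * k)%:R * h)| = if (2 * k < n)%N then cos ((2 * k)%:R * h) else - cos ((2 * k)%:R * h).
Proof.
move=> kn; have hp := pih; have h0 := h_gt0; have pp := pi_gt0 R.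
have kN : k%:R < N by rewrite ltr_nat.
have k0 : 0 <= k%:R :> R by [].
rewrite natrM.
case: ifP => hk.
  apply: ger0_norm; apply: cos_ge0_pihalf.
  have : (2 * k + 1 <= n)%N by lia.
  rewrite -(ler_nat R) natrD natrM /= => hk'.
  apply/andP; split; nra.
apply: ler0_norm.
have : (n <= 2 * k)%N by lia.
rewrite -(ler_nat R) natrM /= => hk'.
have -> : 2%:R * k%:R * h = 2%:R * k%:R * h - pi / 2 + pi / 2 :> R by ring.
rewrite cosDpihalf oppr_le0; apply: sin_ge0_pi.
apply/andP; split; nra.
Qed.

Lemma closed_form : 2 / N * \sum_(k < n) `|cos (k%:R * pi / N)| =
  (if ~~ odd n then 2 * cos h / (N * sin h) else 2 / (N * sin h)).
Proof.
set m := (n.+1 %/ 2)%N.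
have m0 : (0 < m)%N by rewrite /m; lia.
have mn : (m <= n)%N by rewrite /m; lia.
set F := fun k : nat => cos ((2 * k)%:R * h).
have hs : \sum_(k < n) `|cos (k%:R * pi / N)| = 2 * \sum_(k < m) F k - \sum_(k < n) F k.
  rewrite (big_ord_widen n F mn) [X in 2 * X]big_mkcond mulr_sumr -sumrB.
  apply: eq_bigr => k _; rewrite ang cos_sign //.
  have -> : (k < m)%N = (2 * k < n)%N by rewrite /m; apply/idP/idP; lia.
  by case: ifP => _; rewrite /F; ring.
rewrite hs sum_cos1.
have := telesc m.-1; rewrite prednK // => ht.
have s0 := sinh_gt0.
have hF : \sum_(k < m) F k = (sin ((2 * m.-1).+1%:R * h) + sin h) / (2 * sin h).
  by rewrite -ht mulrAC mulfV ?mul1r // mulf_neq0 // gt_eqF.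
rewrite hF.
have hn := odd_double_half n; rewrite -mul2n in hn.
have sh0 : sin h != 0 by rewrite gt_eqF.
have N0 : N != 0 by rewrite gt_eqF // Ngt0.
case: ifP => hodd.
  move/negbTE: hodd => ho; rewrite ho add0n in hn.
  have hnat : ((2 * m.-1).+1 = n - 1)%N by rewrite /m; lia.
  rewrite hnat natrB // (_ : (n%:R - 1%:R) * h = pi / 2 - h); last by rewrite pih; field.
  rewrite sinB sin_pihalf cos_pihalf; field.
  by apply/andP; split.
move/negbFE: hodd => ho; rewrite ho in hn.
have hnat : ((2 * m.-1).+1 = n)%N by rewrite /m; lia.
rewrite hnat (_ : n%:R * h = pi / 2); last by rewrite pih; field.
rewrite sin_pihalf; field.
by apply/andP; split.
Qed.
End G.


Section K.
Variable R : realType.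
Implicit Types a b c x y : R.

Lemma mono_dec a b (f df : R -> R) : a < b ->
  (forall c, a <= c <= b -> is_derive c 1 f (df c)) ->
  (forall c, a < c < b -> df c < 0) -> f b < f a.
Proof.
move=> ab hd hn; rewrite -subr_lt0.
have [c cab ->] : exists2 c, c \in `]a, b[%R & f b - f a = df c * (b - a).
  apply: MVT => //.
    by move=> c; rewrite in_itv /= => /andP[h1 h2]; apply: hd; rewrite !ltW.
  apply: derivable_within_continuous => c; rewrite in_itv /= => hc.
  by have := hd c hc => H; apply: ex_derive.
move: cab; rewrite in_itv /= => hc; have := hn c hc; nra.
Qed.

Lemma mono_inc a b (f df : R -> R) : a < b ->
  (forall c, a <= c <= b -> is_derive c 1 f (df c)) ->
  (forall c, a < c < b -> 0 < df c) -> f a < f b.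
Proof.
move=> ab hd hp; rewrite -ltrN2.
apply: (@mono_dec a b (fun t => - f t) (fun t => - df t)) => //.
  by move=> c hc; apply: is_deriveN; exact: hd.
by move=> c hc; rewrite oppr_lt0; exact: hp.
Qed.

Lemma is_derive_inv x : x != 0 -> is_derive x 1 (fun t : R => t^-1) (- x ^- 2).
Proof.
move=> x0; apply: DeriveDef; first exact: (@derivableV _ _ id).
by rewrite (@deriveV _ _ id) // derive_id; exact: mulr1.
Qed.

Lemma is_derive_invsin x : sin x != 0 -> is_derive x 1 (fun t : R => (sin t)^-1) (- (sin x) ^- 2 * cos x).
Proof.
move=> x0; apply: DeriveDef; first by apply: derivableV => //; exact: derivable_sin.
have ds : derivable (@sin R) x 1 by exact: derivable_sin.
by rewrite deriveV // derive_val.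
Qed.

Definition psi : R -> R := sin - id * cos.
Lemma psi_der c : is_derive c 1 psi (c * sin c).
Proof.
apply: is_derive_eq (is_deriveB (is_derive_sin c) (is_deriveM (is_derive_id c 1) (is_derive_cos c))) _.
change (cos c - (c * - sin c + cos c * 1) = c * sin c); ring.
Qed.

Lemma psi_pos c : 0 < c < pi -> 0 < psi c.
Proof.
move=> /andP[c0 cp].
have -> : 0 = psi 0 by change (0 = sin (0:R) - 0 * cos (0:R)); rewrite sin0 mul0r subr0.
apply: (@mono_inc 0 c psi (fun d => d * sin d)) => //.
  by move=> d _; exact: psi_der.
move=> d /andP[d0 dc]; rewrite mulr_gt0 // sin_gt0_pi // d0 /=; lra.
Qed.

Definition phi : R -> R := sin * (fun t => t^-1).
Lemma phi_dec x y : 0 < y -> y < x -> x < pi -> phi x < phi y.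
Proof.
move=> y0 yx xp.
apply: (@mono_dec y x phi (fun c => - psi c / c ^+ 2)) => //.
  move=> c /andP[yc cx]; have c0 : c != 0 by rewrite gt_eqF //; lra.
  apply: is_derive_eq (is_deriveM (is_derive_sin c) (is_derive_inv c0)) _.
  change (sin c * (- c ^- 2) + c^-1 * cos c = - (sin c - c * cos c) / c ^+ 2).
  by field.
move=> c /andP[yc cx]; rewrite mulNr oppr_lt0 divr_gt0 ?exprn_gt0 //; last lra.
by apply: psi_pos; apply/andP; split; lra.
Qed.

Definition rho : R -> R := id - sin * cos.
Lemma rho_pos c : 0 < c < pi -> 0 < rho c.
Proof.
move=> /andP[c0 cp].
have -> : 0 = rho 0 by change (0 = (0:R) - sin (0:R) * cos (0:R)); rewrite sin0 mul0r subr0.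
apply: (@mono_inc 0 c rho (fun d => 2 * sin d ^+ 2)) => //.
  move=> d _.
  apply: is_derive_eq (is_deriveB (is_derive_id d 1) (is_deriveM (is_derive_sin d) (is_derive_cos d))) _.
  change (1 - (sin d * - sin d + cos d * cos d) = 2 * sin d ^+ 2).
  have := cos2Dsin2 d; nra.
move=> d /andP[d0 dc]; rewrite mulr_gt0 // exprn_gt0 // sin_gt0_pi // d0 /=; lra.
Qed.

Definition chi : R -> R := (id * cos) * (fun t => (sin t)^-1).
Lemma chi_dec x y : 0 < y -> y < x -> x < pi -> chi x < chi y.
Proof.
move=> y0 yx xp.
apply: (@mono_dec y x chi (fun c => - rho c / sin c ^+ 2)) => //.
  move=> c /andP[yc cx]; have s0 : sin c != 0.
    by rewrite gt_eqF // sin_gt0_pi //; apply/andP; split; lra.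
  apply: is_derive_eq (is_deriveM (is_deriveM (is_derive_id c 1) (is_derive_cos c)) (is_derive_invsin s0)) _.
  change (c * cos c * (- sin c ^- 2 * cos c) + (sin c)^-1 * (c * - sin c + cos c * 1) = - (c - sin c * cos c) / sin c ^+ 2).
  suff -> : - (c - sin c * cos c) / sin c ^+ 2 = - (c * (cos c ^+ 2 + sin c ^+ 2) - sin c * cos c) / sin c ^+ 2 by field.
  by rewrite cos2Dsin2 mulr1.
move=> c /andP[yc cx]; rewrite mulNr oppr_lt0 divr_gt0 ?exprn_gt0 //.
  by apply: rho_pos; apply/andP; split; lra.
by apply: sin_gt0_pi; apply/andP; split; lra.
Qed.
End K.


Section L.
Variable R : realType.
Definition hh (n : nat) : R := pi / (2 * n%:R).
Definition V (n : nat) : R := if ~~ odd n then 2 * cos (pi / (2 * n%:R)) / (n%:R * sin (pi / (2 * n%:R)))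
   else 2 / (n%:R * sin (pi / (2 * n%:R))).
Lemma schurV n : (0 < n)%N -> schur_norm (Tmat R n) = V n.
Proof. by move=> n0; rewrite partI // svalueE // closed_form. Qed.

Lemma hh_gt0 n : (0 < n)%N -> 0 < hh n.
Proof. by move=> n0; rewrite /hh divr_gt0 ?pi_gt0 // mulr_gt0 // ltr0n. Qed.
Lemma hh_le n : (0 < n)%N -> hh n <= pi / 2.
Proof.
move=> n0; rewrite /hh ler_pdivrMr ?mulr_gt0 ?ltr0n //.
have : 1 <= n%:R :> R by rewrite ler1n. have := pi_gt0 R. move=> *.
rewrite mulrA divfK //; nra.
Qed.
Lemma hh_lt n : (1 < n)%N -> hh n < pi / 2.
Proof.
move=> n1; rewrite /hh ltr_pdivrMr ?mulr_gt0 ?ltr0n //; last lia.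
have : 2 <= n%:R :> R by rewrite ler_nat. have := pi_gt0 R. move=> *.
rewrite mulrA divfK //; nra.
Qed.
Lemma hh_dec n : (0 < n)%N -> hh n.+2 < hh n.
Proof.
move=> n0; rewrite /hh ltr_pM2l ?pi_gt0 // ltf_pV2 ?qualifE /= ?mulr_gt0 ?ltr0n //.
by rewrite ltr_pM2l // ltr_nat.
Qed.

Lemma sin_hh n : (0 < n)%N -> 0 < sin (hh n).
Proof.
move=> n0; apply: sin_gt0_pi; rewrite hh_gt0 //=.
have := hh_le n0; have := pi_gt0 R; lra.
Qed.

Lemma phiE (x : R) : phi x = sin x * x^-1. Proof. by []. Qed.
Lemma chiE (x : R) : chi x = x * cos x * (sin x)^-1. Proof. by []. Qed.

Lemma alg_odd (P s N : R) : 0 < P -> 0 < s -> 0 < N -> 2 / (N * s) = 4 / P / (s * (P / (2 * N))^-1).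
Proof. move=> P0 s0 N0; field; rewrite !gt_eqF //. Qed.
Lemma alg_even (P s c N : R) : 0 < P -> 0 < s -> 0 < N -> 2 * c / (N * s) = 4 / P * (P / (2 * N) * c * s^-1).
Proof. move=> P0 s0 N0; field; rewrite !gt_eqF //. Qed.

Lemma V_odd n : (0 < n)%N -> 2 / (n%:R * sin (pi / (2 * n%:R))) = 4 / pi / phi (hh n).
Proof. move=> n0; rewrite phiE /hh; apply: alg_odd; rewrite ?pi_gt0 ?ltr0n //; exact: sin_hh. Qed.
Lemma V_even n : (0 < n)%N -> 2 * cos (pi / (2 * n%:R)) / (n%:R * sin (pi / (2 * n%:R))) = 4 / pi * chi (hh n).
Proof. move=> n0; rewrite chiE /hh; apply: alg_even; rewrite ?pi_gt0 ?ltr0n //; exact: sin_hh. Qed.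
Lemma oddSS n : odd n.+2 = odd n. Proof. by rewrite /= negbK. Qed.

Lemma phi_gt0 (x : R) : 0 < x < pi -> 0 < phi x.
Proof. by move=> /andP[x0 xp]; rewrite phiE divr_gt0 // sin_gt0_pi // x0. Qed.

Lemma mono_odd n : (3 <= n)%N -> odd n -> V n.+2 < V n.
Proof.
move=> n3 ho; have n0 : (0 < n)%N by lia.
rewrite /V oddSS ho /= V_odd // V_odd //.
have h1 := hh_gt0 (isT : (0 < n.+2)%N); have h2 := hh_dec (n := n) n0.
have h3 := hh_le n0; have pp := pi_gt0 R.
have p1 : phi (hh n) < phi (hh n.+2) by apply: phi_dec => //; lra.
have p0 : 0 < phi (hh n) by apply: phi_gt0; apply/andP; split; lra.
rewrite ltr_pM2l ?divr_gt0 // ltf_pV2 ?qualifE //=; lra.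
Qed.

Lemma mono_even n : (3 <= n)%N -> ~~ odd n -> V n < V n.+2.
Proof.
move=> n3 ho; have n0 : (0 < n)%N by lia.
rewrite /V oddSS ho V_even // V_even //.
have h1 := hh_gt0 (isT : (0 < n.+2)%N); have h2 := hh_dec (n := n) n0.
have h3 := hh_le n0; have pp := pi_gt0 R.
have p1 : chi (hh n) < chi (hh n.+2) by apply: chi_dec => //; lra.
by rewrite ltr_pM2l ?divr_gt0.
Qed.

Lemma trig_facts (h : R) : 0 < h < pi / 2 ->
  [/\ 0 < sin h, 0 < cos h, h * cos h < sin h, sin h * cos h < h & sin h < h].
Proof.
move=> /andP[h0 hp]; have pp := pi_gt0 R.
have s0 : 0 < sin h by apply: sin_gt0_pi; apply/andP; split; lra.
have c0 : 0 < cos h by apply: cos_gt0_pihalf; apply/andP; split; lra.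
have A1 : 0 < sin h - h * cos h.
  have : 0 < psi h by apply: psi_pos; apply/andP; split; lra.
  by move=> H; exact: H.
have A2 : 0 < h - sin h * cos h.
  have : 0 < rho h by apply: rho_pos; apply/andP; split; lra.
  by move=> H; exact: H.
have A3 : 0 < h / 2 - sin (h / 2) * cos (h / 2).
  have : 0 < rho (h / 2) by apply: rho_pos; apply/andP; split; lra.
  by move=> H; exact: H.
split => //; try lra.
have e : sin h = 2 * (sin (h / 2) * cos (h / 2)).
  rewrite {1}(_ : h = (h / 2) *+ 2); last by rewrite -mulr_natr divfK.
  by rewrite sin_mulr2n -mulr_natl [cos _ * _]mulrC.
rewrite e; lra.
Qed.

Lemma V_bounds n : (1 < n)%N -> 4 / pi * cos (hh n) <= V n <= 4 / pi * (cos (hh n))^-1.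
Proof.
move=> n1; have n0 : (0 < n)%N by lia.
have hp := hh_lt n1; have h0 := hh_gt0 n0; have pp := pi_gt0 R.
have [s0 c0 A1 A2 A3] := trig_facts (h := hh n) (ltac:(apply/andP; split => //)).
set h := hh n in hp h0 s0 c0 A1 A2 A3 *; set s := sin h in s0 A1 A2 A3 *; set c := cos h in c0 A1 A2 A3 *.
suff key : forall t, c <= t -> t * c <= 1 -> 4 / pi * c <= 4 / pi * t <= 4 / pi * c^-1.
  have c1 : c <= 1 by exact: cos_le1.
  rewrite /V; case: ifP => _.
    rewrite V_even // chiE -/h -/s -/c; apply: key.
      rewrite ler_pdivlMr //; nra.
    rewrite mulrAC ler_pdivrMr // mul1r; nra.
  rewrite V_odd // phiE -/h -/s invfM invrK (mulrC s^-1); apply: key.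
    rewrite ler_pdivlMr //; nra.
  rewrite mulrAC ler_pdivrMr // mul1r; nra.
move=> t ct tc; apply/andP; split; rewrite ler_pM2l ?divr_gt0 //.
by rewrite -div1r ler_pdivlMr.
Qed.
End L.


Lemma hh_cvg0 (R : realType) : (@hh R) @ \oo --> 0.
Proof.
apply: (@squeeze_cvgr _ _ _ _ (fun=> 0) (fun n => pi * harmonic n)).
- near=> n.
  have n1 : (1 <= n)%N by near: n; exact: nbhs_infty_ge.
  apply/andP; split; first exact/ltW/hh_gt0.
  rewrite /hh /= ler_pdivrMr ?mulr_gt0 ?ltr0n //.
  rewrite -mulrA ler_peMr ?pi_ge0 // mulrC ler_pdivlMr ?ltr0n // mul1r.
  have : 1 <= n%:R :> R by rewrite ler1n. rewrite -natr1. lra.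
- exact: cvg_cst.
- rewrite -[X in _ --> X](mulr0 (pi : R)). exact: cvgMl_tmp cvg_harmonic.
Unshelve. all: by end_near.
Qed.

Lemma V_cvg (R : realType) : (fun n : nat => schur_norm (Tmat R n)) @ \oo --> 4 / (pi : R).
Proof.
have C : (fun n => cos (@hh R n)) @ \oo --> (1 : R).
  have hc : {for (0 : R), continuous (@cos R)} by apply: continuous_cos.
  have H := (@continuous_cvg _ _ _ _ _ (@hh R) cos 0 hc (@hh_cvg0 R)).
  rewrite cos0 in H; exact: H.
have L1 : (fun n => 4 / pi * cos (hh R n)) @ \oo --> 4 / (pi : R).
  rewrite -[X in _ --> X]mulr1; apply: cvgMl_tmp; exact: C.
have L2 : (fun n => 4 / pi * (cos (hh R n))^-1) @ \oo --> 4 / (pi : R).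
  rewrite -[X in _ --> X]mulr1; apply: cvgMl_tmp; rewrite -invr1; apply: cvgV => //; exact: C.
apply: (@squeeze_cvgr _ _ _ _ _ _ _ _ _ L1 L2).
near=> n.
have n1 : (2 <= n)%N by near: n; exact: nbhs_infty_ge.
rewrite schurV; last by lia.
exact: V_bounds.
Unshelve. all: by end_near.
Qed.

Theorem mainTheorem14 (R : realType) :
  (forall n : nat, (3 <= n)%N ->
     schur_norm (Tmat R n)
       = 2 / n%:R * \sum_(k < n) `|cos (k%:R * pi / n%:R)|
   /\ schur_norm (Tmat R n)
       = (if ~~ odd n
          then 2 * cos (pi / (2 * n%:R)) / (n%:R * sin (pi / (2 * n%:R)))
          else 2 / (n%:R * sin (pi / (2 * n%:R))))) /\
  ((fun n : nat => schur_norm (Tmat R n)) @ \oo --> 4 / (pi : R)) /\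
  (forall n : nat, (3 <= n)%N -> odd n ->
     schur_norm (Tmat R n.+2) < schur_norm (Tmat R n)) /\
  (forall n : nat, (3 <= n)%N -> ~~ odd n ->
     schur_norm (Tmat R n) < schur_norm (Tmat R n.+2)).
Proof.
split; [|split; [exact: V_cvg|split]].
- move=> n n3; have n0 : (0 < n)%N by lia.
  by rewrite partI // svalueE //; split => //; rewrite closed_form.
- move=> n n3 ho; rewrite !schurV //; last by lia. exact: mono_odd.
- move=> n n3 ho; rewrite !schurV //; last by lia. exact: mono_even.
Qed.
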